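(* Let $(\mathcal{A},\mathbb{E},\mathfrak{s})$ be a weakly idempotent complete extriangulated category with an admissible model structure $(\mathrm{CoFib},\mathrm{Fib},\mathrm{Weq})$. Let $X\xrightarrow{i}Y\xrightarrow{p}Z\overset{\delta}{\dashrightarrow}$ and $X'\xrightarrow{i'}Y'\xrightarrow{p'}Z'\overset{\delta'}{\dashrightarrow}$ be $\mathbb{E}$-triangles. (1) If $f:X\to X'$ and $g:Y\to Y'$ are weak equivalences with $gi=i'f$, then there exists a weak equivalence $h:Z\to Z'$ with $hp=p'g$ and $f_*\delta=h^*\delta'$. (2) If $g:Y\to Y'$ and $h:Z\to Z'$ are weak equivalences with $hp=p'g$, then there exists a weak equivalence $f:X\to X'$ with $gi=i'f$ and $f_*\delta=h^*\delta'$. (3) If $f:X\to X'$ and $h:Z\to Z'$ are weak equivalences with $f_*\delta=h^*\delta'$, then there exists a weak equivalence $g:Y\to Y'$ with $gi=i'f$ and $p'g=hp$.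
   Context: Extriangulated category $(\mathcal{A},\mathbb{E},\mathfrak{s})$ in the sense of Nakaoka–Palu: additive $\mathcal{A}$, biadditive $\mathbb{E}:\mathcal{A}^{op}\times\mathcal{A}\to\mathrm{Ab}$, realization $\mathfrak{s}$ satisfying (ET1)–(ET4)$^{op}$; realizations are $\mathbb{E}$-triangles $X\to Y\to Z\overset{\delta}{\dashrightarrow}$ with $\delta\in\mathbb{E}(Z,X)$; the first map is an $\mathbb{E}$-inflation with cone $Z$, the second an $\mathbb{E}$-deflation with cocone $X$. $u_*\delta=\mathbb{E}(Z,u)(\delta)$, $w^*\delta=\mathbb{E}(w,X)(\delta)$. Weakly idempotent complete: every split monomorphism has a cokernel. For a (Quillen) model structure $(\mathrm{CoFib},\mathrm{Fib},\mathrm{Weq})$ on $\mathcal{A}$, $\mathcal{C},\mathcal{F},\mathcal{W}$ denote cofibrant, fibrant and trivial objects; it is admissible if $\mathrm{CoFib}$ = $\mathbb{E}$-inflations with cone in $\mathcal{C}$, $\mathrm{Fib}$ = $\mathbb{E}$-deflations with cocone in $\mathcal{F}$, $\mathrm{CoFib}\cap\mathrm{Weq}$ = $\mathbb{E}$-inflations with cone in $\mathcal{C}\cap\mathcal{W}$, $\mathrm{Fib}\cap\mathrm{Weq}$ = $\mathbb{E}$-deflations with cocone in $\mathcal{F}\cap\mathcal{W}$. *)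

(* Defs.v *)
From mathcomp Require Import all_boot ssralg.
Set Implicit Arguments.
Unset Strict Implicit.
Unset Printing Implicit Defensive.
Import GRing.Theory.
Local Open Scope ring_scope.

Record PreAddCat := {
  Ob :> Type;
  Mor : Ob -> Ob -> zmodType;
  mcomp : forall A B C : Ob, Mor B C -> Mor A B -> Mor A C;
  idm : forall A : Ob, Mor A A;
  compA : forall (A B C D : Ob) (h : Mor C D) (g : Mor B C) (f : Mor A B),
      mcomp h (mcomp g f) = mcomp (mcomp h g) f;
  comp1m : forall (A B : Ob) (f : Mor A B), mcomp (idm B) f = f;
  compm1 : forall (A B : Ob) (f : Mor A B), mcomp f (idm A) = f;
  compDl : forall (A B C : Ob) (g g' : Mor B C) (f : Mor A B),
      mcomp (g + g') f = mcomp g f + mcomp g' f;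
  compDr : forall (A B C : Ob) (g : Mor B C) (f f' : Mor A B),
      mcomp g (f + f') = mcomp g f + mcomp g f'
}.
Arguments mcomp {P A B C} g f : rename.
Arguments idm {P} A : rename.
Arguments Mor {P} A B : rename.

Section Basic.
Variable P : PreAddCat.

Definition is_iso (A B : P) (f : Mor A B) : Prop :=
  exists g : Mor B A, mcomp g f = idm A /\ mcomp f g = idm B.

Record biproduct (A B : P) := Biproduct {
  bp_ob : P;
  bp_i1 : Mor A bp_ob;
  bp_i2 : Mor B bp_ob;
  bp_p1 : Mor bp_ob A;
  bp_p2 : Mor bp_ob B;
  bp_p1i1 : mcomp bp_p1 bp_i1 = idm A;
  bp_p2i2 : mcomp bp_p2 bp_i2 = idm B;
  bp_p1i2 : mcomp bp_p1 bp_i2 = 0;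
  bp_p2i1 : mcomp bp_p2 bp_i1 = 0;
  bp_sum : mcomp bp_i1 bp_p1 + mcomp bp_i2 bp_p2 = idm bp_ob
}.

Definition mor_dsum (A A' B B' : P) (SA : biproduct A A') (SB : biproduct B B')
  (f : Mor A B) (f' : Mor A' B') : Mor (bp_ob SA) (bp_ob SB) :=
  mcomp (bp_i1 SB) (mcomp f (bp_p1 SA)) + mcomp (bp_i2 SB) (mcomp f' (bp_p2 SA)).

Definition is_split_mono (A B : P) (s : Mor A B) : Prop :=
  exists r : Mor B A, mcomp r s = idm A.

Definition is_cokernel (A B C : P) (s : Mor A B) (q : Mor B C) : Prop :=
  mcomp q s = 0 /\
  forall (T : P) (t : Mor B T), mcomp t s = 0 ->
    exists u : Mor C T, mcomp u q = t /\
      forall u' : Mor C T, mcomp u' q = t -> u' = u.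

Definition is_retract (A B A' B' : P) (f : Mor A B) (g : Mor A' B') : Prop :=
  exists (s1 : Mor A A') (r1 : Mor A' A) (s2 : Mor B B') (r2 : Mor B' B),
    mcomp r1 s1 = idm A /\ mcomp r2 s2 = idm B /\
    mcomp g s1 = mcomp s2 f /\ mcomp f r1 = mcomp r2 g.

Definition llp (A B X Y : P) (i : Mor A B) (p : Mor X Y) : Prop :=
  forall (u : Mor A X) (v : Mor B Y), mcomp p u = mcomp v i ->
    exists d : Mor B X, mcomp d i = u /\ mcomp p d = v.

End Basic.

Record AddCat := {
  addcat :> PreAddCat;
  zob : addcat;
  zob_zero : idm zob = 0;
  biprod_ex : forall A B : addcat, exists S : biproduct A B, True
}.

Definition weakly_idempotent_complete (C : AddCat) : Prop :=
  forall (A B : C) (s : Mor A B), is_split_mono s ->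
    exists (Q : C) (q : Mor B Q), is_cokernel s q.

Definition seq_equiv (P : PreAddCat) (A B B' C : P)
  (x : Mor A B) (y : Mor B C) (x' : Mor A B') (y' : Mor B' C) : Prop :=
  exists b : Mor B B', is_iso b /\ mcomp b x = x' /\ mcomp y' b = y.

Record ExtriCat := {
  ecat :> AddCat;
  (* E(C, A), written Ext C A *)
  Ext : ecat -> ecat -> zmodType;
  (* c^* : E(C,A) -> E(C',A) for c : C' -> C *)
  pb : forall (C' C A : ecat), Mor C' C -> Ext C A -> Ext C' A;
  (* a_* : E(C,A) -> E(C,A') for a : A -> A' *)
  pf : forall (C A A' : ecat), Mor A A' -> Ext C A -> Ext C A';
  pbD : forall C' C A (c : Mor C' C) (d e : Ext C A), pb c (d + e) = pb c d + pb c e;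
  pfD : forall C A A' (a : Mor A A') (d e : Ext C A), pf a (d + e) = pf a d + pf a e;
  pb_id : forall C A (d : Ext C A), pb (idm C) d = d;
  pf_id : forall C A (d : Ext C A), pf (idm A) d = d;
  pb_comp : forall C'' C' C A (c' : Mor C'' C') (c : Mor C' C) (d : Ext C A),
      pb (mcomp c c') d = pb c' (pb c d);
  pf_comp : forall C A A' A'' (a : Mor A A') (a' : Mor A' A'') (d : Ext C A),
      pf (mcomp a' a) d = pf a' (pf a d);
  pb_pf : forall C' C A A' (c : Mor C' C) (a : Mor A A') (d : Ext C A),
      pb c (pf a d) = pf a (pb c d);
  pb_addm : forall C' C A (c c' : Mor C' C) (d : Ext C A), pb (c + c') d = pb c d + pb c' d;
  pf_addm : forall C A A' (a a' : Mor A A') (d : Ext C A), pf (a + a') d = pf a d + pf a' d;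
  (* realization s: real d x y  means  s(d) = [A -x-> B -y-> C] *)
  real : forall (A B C : ecat), Ext C A -> Mor A B -> Mor B C -> Prop;
  real_ex : forall A C (d : Ext C A), exists (B : ecat) (x : Mor A B) (y : Mor B C), real d x y;
  real_uniq : forall A B B' C (d : Ext C A) (x : Mor A B) (y : Mor B C)
      (x' : Mor A B') (y' : Mor B' C), real d x y -> real d x' y' -> seq_equiv x y x' y';
  real_closed : forall A B B' C (d : Ext C A) (x : Mor A B) (y : Mor B C)
      (x' : Mor A B') (y' : Mor B' C), real d x y -> seq_equiv x y x' y' -> real d x' y';
  real_morph : forall A B C A' B' C' (d : Ext C A) (d' : Ext C' A')
      (x : Mor A B) (y : Mor B C) (x' : Mor A' B') (y' : Mor B' C')
      (a : Mor A A') (c : Mor C C'),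
      real d x y -> real d' x' y' -> pf a d = pb c d' ->
      exists b : Mor B B', mcomp b x = mcomp x' a /\ mcomp y' b = mcomp c y;
  real_zero : forall (A C : ecat) (S : biproduct A C),
      real (0 : Ext C A) (bp_i1 S) (bp_p2 S);
  real_dsum : forall A B C A' B' C' (d : Ext C A) (d' : Ext C' A')
      (x : Mor A B) (y : Mor B C) (x' : Mor A' B') (y' : Mor B' C')
      (SA : biproduct A A') (SB : biproduct B B') (SC : biproduct C C'),
      real d x y -> real d' x' y' ->
      real (pf (bp_i1 SA) (pb (bp_p1 SC) d) + pf (bp_i2 SA) (pb (bp_p2 SC) d'))
           (mor_dsum SA SB x x') (mor_dsum SB SC y y');
  ET3 : forall A B C A' B' C' (d : Ext C A) (d' : Ext C' A')
      (x : Mor A B) (y : Mor B C) (x' : Mor A' B') (y' : Mor B' C')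
      (a : Mor A A') (b : Mor B B'),
      real d x y -> real d' x' y' -> mcomp b x = mcomp x' a ->
      exists c : Mor C C', mcomp c y = mcomp y' b /\ pf a d = pb c d';
  ET3op : forall A B C A' B' C' (d : Ext C A) (d' : Ext C' A')
      (x : Mor A B) (y : Mor B C) (x' : Mor A' B') (y' : Mor B' C')
      (b : Mor B B') (c : Mor C C'),
      real d x y -> real d' x' y' -> mcomp y' b = mcomp c y ->
      exists a : Mor A A', mcomp x' a = mcomp b x /\ pf a d = pb c d';
  ET4 : forall A B C D F (d : Ext D A) (d' : Ext F B)
      (f : Mor A B) (f' : Mor B D) (g : Mor B C) (g' : Mor C F),
      real d f f' -> real d' g g' ->
      exists (E : ecat) (dd : Mor D E) (e : Mor E F) (h' : Mor C E) (d'' : Ext E A),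
        real d'' (mcomp g f) h' /\
        mcomp dd f' = mcomp h' g /\ mcomp e h' = g' /\
        real (pf f' d') dd e /\ pb dd d'' = d /\ pf f d'' = pb e d';
  ET4op : forall A B C D F (d : Ext B D) (d' : Ext C F)
      (f' : Mor D A) (f : Mor A B) (g' : Mor F B) (g : Mor B C),
      real d f' f -> real d' g' g ->
      exists (E : ecat) (dd : Mor D E) (e : Mor E F) (h' : Mor E A) (d'' : Ext C E),
        real d'' h' (mcomp g f) /\
        mcomp h' dd = f' /\ mcomp f h' = mcomp g' e /\
        real (pb g' d) dd e /\ pf e d'' = d' /\ pf dd d = pb g d''
}.
Arguments pb {e C' C A} c d : rename.
Arguments pf {e C A A'} a d : rename.
Arguments real {e A B C} d x y : rename.

(* Model structures (Quillen closed model structure, without the       *)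
(* finite (co)limit axiom) and admissibility                           *)

Record ModelStructure (P : PreAddCat) := {
  CoFib : forall A B : P, Mor A B -> Prop;
  Fib : forall A B : P, Mor A B -> Prop;
  Weq : forall A B : P, Mor A B -> Prop;
  weq_comp : forall A B C (f : Mor A B) (g : Mor B C),
      Weq f -> Weq g -> Weq (mcomp g f);
  weq_left : forall A B C (f : Mor A B) (g : Mor B C),
      Weq f -> Weq (mcomp g f) -> Weq g;
  weq_right : forall A B C (f : Mor A B) (g : Mor B C),
      Weq g -> Weq (mcomp g f) -> Weq f;
  cofib_retract : forall A B A' B' (f : Mor A B) (g : Mor A' B'),
      is_retract f g -> CoFib g -> CoFib f;
  fib_retract : forall A B A' B' (f : Mor A B) (g : Mor A' B'),
      is_retract f g -> Fib g -> Fib f;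
  weq_retract : forall A B A' B' (f : Mor A B) (g : Mor A' B'),
      is_retract f g -> Weq g -> Weq f;
  lift_tcofib : forall A B X Y (i : Mor A B) (p : Mor X Y),
      CoFib i -> Weq i -> Fib p -> llp i p;
  lift_tfib : forall A B X Y (i : Mor A B) (p : Mor X Y),
      CoFib i -> Fib p -> Weq p -> llp i p;
  fact_tcofib : forall A B (f : Mor A B),
      exists (M : P) (i : Mor A M) (p : Mor M B),
        f = mcomp p i /\ CoFib i /\ Weq i /\ Fib p;
  fact_tfib : forall A B (f : Mor A B),
      exists (M : P) (i : Mor A M) (p : Mor M B),
        f = mcomp p i /\ CoFib i /\ Fib p /\ Weq p
}.
Arguments CoFib {P} m {A B} f : rename.
Arguments Fib {P} m {A B} f : rename.
Arguments Weq {P} m {A B} f : rename.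

Section Admissible.
Variables (E : ExtriCat) (M : ModelStructure E).

Definition cofibrant (X : E) : Prop := CoFib M (0 : Mor (zob E) X).
Definition fibrant (X : E) : Prop := Fib M (0 : Mor X (zob E)).
Definition trivial_ob (X : E) : Prop := Weq M (0 : Mor (zob E) X).

Definition inflation_cone_in (S : E -> Prop) (A B : E) (x : Mor A B) : Prop :=
  exists (C : E) (y : Mor B C) (d : Ext C A), S C /\ real d x y.
Definition deflation_cocone_in (S : E -> Prop) (B C : E) (y : Mor B C) : Prop :=
  exists (A : E) (x : Mor A B) (d : Ext C A), S A /\ real d x y.

Definition admissible : Prop :=
  (forall (A B : E) (f : Mor A B), CoFib M f <-> inflation_cone_in cofibrant f) /\
  (forall (A B : E) (f : Mor A B), Fib M f <-> deflation_cocone_in fibrant f) /\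
  (forall (A B : E) (f : Mor A B), (CoFib M f /\ Weq M f) <->
      inflation_cone_in (fun X => cofibrant X /\ trivial_ob X) f) /\
  (forall (A B : E) (f : Mor A B), (Fib M f /\ Weq M f) <->
      deflation_cocone_in (fun X => fibrant X /\ trivial_ob X) f).
End Admissible.

(* Main.v *)
Require Import Defs.
From mathcomp Require Import all_boot ssralg.
Set Implicit Arguments.
Unset Strict Implicit.
Unset Printing Implicit Defensive.
Import GRing.Theory.
Local Open Scope ring_scope.

Lemma compm0 (P : PreAddCat) (A B C : P) (g : Mor B C) : mcomp g (0 : Mor A B) = 0.
Proof.
have H := compDr g (0 : Mor A B) 0; rewrite addr0 in H.
by apply: (addrI (mcomp g 0)); rewrite addr0 -H.
Qed.

Lemma comp0m (P : PreAddCat) (A B C : P) (f : Mor A B) : mcomp (0 : Mor B C) f = 0.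
Proof.
have H := compDl (0 : Mor B C) 0 f; rewrite addr0 in H.
by apply: (addrI (mcomp 0 f)); rewrite addr0 -H.
Qed.

Lemma compmN (P : PreAddCat) (A B C : P) (g : Mor B C) (f : Mor A B) :
  mcomp g (- f) = - mcomp g f.
Proof.
apply: (addrI (mcomp g f)); by rewrite -compDr !subrr compm0.
Qed.

Lemma compNm (P : PreAddCat) (A B C : P) (g : Mor B C) (f : Mor A B) :
  mcomp (- g) f = - mcomp g f.
Proof.
apply: (addrI (mcomp g f)); by rewrite -compDl !subrr comp0m.
Qed.

Lemma compBr (P : PreAddCat) (A B C : P) (g : Mor B C) (f f' : Mor A B) :
  mcomp g (f - f') = mcomp g f - mcomp g f'.
Proof. by rewrite compDr compmN. Qed.

Lemma compBl (P : PreAddCat) (A B C : P) (g g' : Mor B C) (f : Mor A B) :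
  mcomp (g - g') f = mcomp g f - mcomp g' f.
Proof. by rewrite compDl compNm. Qed.

Lemma to_zob (C : AddCat) (A : C) (u : Mor A (zob C)) : u = 0.
Proof. by rewrite -(comp1m u) zob_zero comp0m. Qed.

Lemma from_zob (C : AddCat) (A : C) (u : Mor (zob C) A) : u = 0.
Proof. by rewrite -(compm1 u) zob_zero compm0. Qed.

Lemma pf0e (E : ExtriCat) (C A A' : E) (d : Ext C A) : pf (0 : Mor A A') d = 0.
Proof.
have H := pf_addm (0 : Mor A A') 0 d; rewrite addr0 in H.
by apply: (addrI (pf 0 d)); rewrite addr0 -H.
Qed.

Lemma pb0e (E : ExtriCat) (C' C A : E) (d : Ext C A) : pb (0 : Mor C' C) d = 0.
Proof.
have H := pb_addm (0 : Mor C' C) 0 d; rewrite addr0 in H.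
by apply: (addrI (pb 0 d)); rewrite addr0 -H.
Qed.

Lemma pfe0 (E : ExtriCat) (C A A' : E) (a : Mor A A') : pf a (0 : Ext C A) = 0.
Proof.
have H := pfD a (0 : Ext C A) 0; rewrite addr0 in H.
by apply: (addrI (pf a 0)); rewrite addr0 -H.
Qed.

Lemma pbe0 (E : ExtriCat) (C' C A : E) (c : Mor C' C) : pb c (0 : Ext C A) = 0.
Proof.
have H := pbD c (0 : Ext C A) 0; rewrite addr0 in H.
by apply: (addrI (pb c 0)); rewrite addr0 -H.
Qed.

Lemma pbN (E : ExtriCat) (C' C A : E) (c : Mor C' C) (d : Ext C A) : pb (- c) d = - pb c d.
Proof. apply: (addrI (pb c d)); by rewrite -pb_addm !subrr pb0e. Qed.

Lemma pbB (E : ExtriCat) (C' C A : E) (c c' : Mor C' C) (d : Ext C A) :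
  pb (c - c') d = pb c d - pb c' d.
Proof. by rewrite pb_addm pbN. Qed.

Lemma pfN (E : ExtriCat) (C A A' : E) (a : Mor A A') (d : Ext C A) : pf (- a) d = - pf a d.
Proof. apply: (addrI (pf a d)); by rewrite -pf_addm !subrr pf0e. Qed.

Lemma pfeN (E : ExtriCat) (C A A' : E) (a : Mor A A') (d : Ext C A) : pf a (- d) = - pf a d.
Proof. apply: (addrI (pf a d)); by rewrite -pfD !subrr pfe0. Qed.

Lemma pbeN (E : ExtriCat) (C' C A : E) (c : Mor C' C) (d : Ext C A) : pb c (- d) = - pb c d.
Proof. apply: (addrI (pb c d)); by rewrite -pbD !subrr pbe0. Qed.

Lemma pfeB (E : ExtriCat) (C A A' : E) (a : Mor A A') (d d' : Ext C A) :
  pf a (d - d') = pf a d - pf a d'.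
Proof. by rewrite pfD pfeN. Qed.

Lemma pbeB (E : ExtriCat) (C' C A : E) (c : Mor C' C) (d d' : Ext C A) :
  pb c (d - d') = pb c d - pb c d'.
Proof. by rewrite pbD pbeN. Qed.
Definition bp_left (C : AddCat) (A : C) : biproduct A (zob C).
Proof.
refine (@Biproduct C A (zob C) A (idm A) 0 (idm A) 0 _ _ _ _ _).
- exact: compm1.
- by rewrite comp0m zob_zero.
- exact: compm0.
- exact: comp0m.
- by rewrite compm1 comp0m addr0.
Defined.

Definition bp_right (C : AddCat) (A : C) : biproduct (zob C) A.
Proof.
refine (@Biproduct C (zob C) A A 0 (idm A) 0 (idm A) _ _ _ _ _).
- by rewrite comp0m zob_zero.
- exact: compm1.
- exact: comp0m.
- exact: compm0.
- by rewrite compm1 comp0m add0r.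
Defined.

Lemma real_triv_l (E : ExtriCat) (A : E) :
  real (0 : Ext (zob E) A) (idm A) (0 : Mor A (zob E)).
Proof. exact: (real_zero (bp_left A)). Qed.

Lemma real_triv_r (E : ExtriCat) (A : E) :
  real (0 : Ext A (zob E)) (0 : Mor (zob E) A) (idm A).
Proof. exact: (real_zero (bp_right A)). Qed.

Lemma real_comp0 (E : ExtriCat) (A B C : E) (d : Ext C A) (x : Mor A B) (y : Mor B C) :
  real d x y -> mcomp y x = 0.
Proof.
move=> H.
have [c [Hc _]] := ET3 (real_triv_l A) H (erefl (mcomp x (idm A))).
by rewrite -Hc compm0.
Qed.

Lemma real_pf0 (E : ExtriCat) (A B C : E) (d : Ext C A) (x : Mor A B) (y : Mor B C) :
  real d x y -> pf x d = 0.
Proof.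
move=> H.
have H0 : mcomp (0 : Mor B (zob E)) (idm B) = mcomp (0 : Mor C (zob E)) y.
  by rewrite !comp0m.
have [a [Ha1 Ha2]] := ET3op H (real_triv_l B) H0.
move: Ha1; rewrite !comp1m => Ha.
by rewrite -Ha Ha2 pbe0.
Qed.

Lemma real_pb0 (E : ExtriCat) (A B C : E) (d : Ext C A) (x : Mor A B) (y : Mor B C) :
  real d x y -> pb y d = 0.
Proof.
move=> H.
have H0 : mcomp (idm B) (0 : Mor (zob E) B) = mcomp x (0 : Mor (zob E) A).
  by rewrite !compm0.
have [c [Hc1 Hc2]] := ET3 (real_triv_r B) H H0.
move: Hc1; rewrite !compm1 => Hc.
by rewrite -Hc -Hc2 pfe0.
Qed.

Lemma real_lift (E : ExtriCat) (A B C T : E) (d : Ext C A) (x : Mor A B) (y : Mor B C)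
  (u : Mor T B) : real d x y -> mcomp y u = 0 -> exists v, mcomp x v = u.
Proof.
move=> H Hu.
have H0 : mcomp y u = mcomp (0 : Mor (zob E) C) (0 : Mor T (zob E)).
  by rewrite Hu comp0m.
have [a [Ha _]] := ET3op (real_triv_l T) H H0.
by exists a; rewrite Ha compm1.
Qed.

Lemma real_ext (E : ExtriCat) (A B C T : E) (d : Ext C A) (x : Mor A B) (y : Mor B C)
  (u : Mor B T) : real d x y -> mcomp u x = 0 -> exists v, mcomp v y = u.
Proof.
move=> H Hu.
have H0 : mcomp u x = mcomp (0 : Mor (zob E) T) (0 : Mor A (zob E)).
  by rewrite Hu comp0m.
have [c [Hc _]] := ET3 H (real_triv_r T) H0.
by exists c; rewrite Hc comp1m.
Qed.

Lemma real_hc (E : ExtriCat) (A B C T : E) (d : Ext C A) (x : Mor A B) (y : Mor B C)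
  (u : Mor T C) : real d x y -> pb u d = 0 -> exists v, mcomp y v = u.
Proof.
move=> H Hu.
have H0 : pf (0 : Mor (zob E) A) (0 : Ext T (zob E)) = pb u d by rewrite Hu pfe0.
have [b [_ Hb]] := real_morph (real_triv_r T) H H0.
by exists b; rewrite Hb compm1.
Qed.

Lemma real_L6 (E : ExtriCat) (A B C T : E) (d : Ext C A) (x : Mor A B) (y : Mor B C)
  (th : Ext T A) : real d x y -> pf x th = 0 -> exists u : Mor T C, th = pb u d.
Proof.
move=> H Hth.
have [N [x2 [y2 H2]]] := real_ex th.
have [S _] := biprod_ex B T.
have H0 : pf x th = pb (idm T) (0 : Ext T B) by rewrite Hth pbe0.
have [b [Hb1 Hb2]] := real_morph H2 (real_zero S) H0.
have H1 : mcomp (mcomp (bp_p1 S) b) x2 = mcomp x (idm A).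
  by rewrite -Defs.compA Hb1 Defs.compA bp_p1i1 comp1m compm1.
have [c [_ Hc]] := ET3 H2 H H1.
by exists c; rewrite -Hc pf_id.
Qed.

Lemma real_split (E : ExtriCat) (A B C : E) (x : Mor A B) (y : Mor B C) :
  real (0 : Ext C A) x y ->
  exists (s : Mor C B) (r : Mor B A), mcomp y s = idm C /\ mcomp r x = idm A /\
    mcomp x r + mcomp s y = idm B /\ mcomp r s = 0.
Proof.
move=> H.
have [S _] := biprod_ex A C.
have [b [[g [Hgb Hbg]] [Hb1 Hb2]]] := real_uniq (real_zero S) H.
exists (mcomp b (bp_i2 S)), (mcomp (bp_p1 S) g).
have Hy : y = mcomp (bp_p2 S) g by rewrite -Hb2 -Defs.compA Hbg compm1.
split; [|split; [|split]].
- by rewrite Defs.compA Hb2 bp_p2i2.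
- by rewrite -Hb1 -Defs.compA (Defs.compA g) Hgb comp1m bp_p1i1.
- rewrite Hy -Hb1 -!Defs.compA -compDr (Defs.compA (bp_i1 S)) (Defs.compA (bp_i2 S)).
  by rewrite -compDl bp_sum comp1m Hbg.
- by rewrite -Defs.compA (Defs.compA g) Hgb comp1m bp_p1i2.
Qed.

Lemma real_CU (E : ExtriCat) (A B C C' : E) (d : Ext C A) (d' : Ext C' A)
  (x : Mor A B) (y : Mor B C) (y' : Mor B C') (c : Mor C C') :
  real d x y -> real d' x y' -> mcomp c y = y' -> d = pb c d' -> is_iso c.
Proof.
move=> H H' Hcy Hd.
have inj : forall (T : E) (u : Mor T C), mcomp c u = 0 -> u = 0.
  move=> T u Hu.
  have Hu0 : pb u d = 0 by rewrite Hd -pb_comp Hu pb0e.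
  have [v Hv] := real_hc H Hu0.
  have Hv0 : mcomp y' v = 0 by rewrite -Hcy -Defs.compA Hv.
  have [w Hw] := real_lift H' Hv0.
  by rewrite -Hv -Hw Defs.compA (real_comp0 H) comp0m.
have surj : forall (T : E) (u' : Mor T C'), exists u, mcomp c u = u'.
  move=> T u'.
  have Hx : pf x (pb u' d') = 0 by rewrite -pb_pf (real_pf0 H') pbe0.
  have [u Hu] := real_L6 H Hx.
  have H0 : pb (mcomp c u - u') d' = 0.
    by rewrite pbB pb_comp -Hd -Hu subrr.
  have [v Hv] := real_hc H' H0.
  exists (u - mcomp y v).
  by rewrite compBr Defs.compA Hcy Hv opprB addrC subrK.
have [c' Hc'] := surj _ (idm C').
exists c'; split => //.
apply/eqP; rewrite -subr_eq0; apply/eqP; apply: inj.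
by rewrite compBr Defs.compA Hc' comp1m compm1 subrr.
Qed.

Lemma weq_idm (P : PreAddCat) (M : ModelStructure P) (A : P) : Weq M (idm A).
Proof.
have [N [i [p [Hf [_ [Hi _]]]]]] := fact_tcofib M (idm A).
have HN : Weq M (idm N).
  by apply: (weq_left Hi); rewrite comp1m.
apply: (weq_retract (g := idm N)) HN.
exists i, p, i, p; split; [by []|split; [by []|split]].
- by rewrite comp1m compm1.
- by rewrite comp1m compm1.
Qed.

Lemma weq_iso (P : PreAddCat) (M : ModelStructure P) (A B : P) (f : Mor A B) :
  is_iso f -> Weq M f.
Proof.
move=> [g [Hgf Hfg]].
apply: (weq_retract (g := idm B)) (weq_idm M B).
exists f, g, (idm B), (idm B); split; [by []|split; [exact: comp1m|split]].
- by [].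
- by rewrite Hfg comp1m.
Qed.

Lemma adm_infl (E : ExtriCat) (M : ModelStructure E) (A B C : E) (d : Ext C A)
  (x : Mor A B) (y : Mor B C) :
  admissible M -> real d x y -> cofibrant M C /\ trivial_ob M C -> Weq M x.
Proof.
move=> [_ [_ [H3 _]]] Hr HC.
have := (H3 A B x).2; case; last by [].
by exists C, y, d.
Qed.

Lemma adm_defl (E : ExtriCat) (M : ModelStructure E) (A B C : E) (d : Ext C A)
  (x : Mor A B) (y : Mor B C) :
  admissible M -> real d x y -> fibrant M A /\ trivial_ob M A -> Weq M y.
Proof.
move=> [_ [_ [_ H4]]] Hr HC.
have := (H4 B C y).2; case; last by [].
by exists A, x, d.
Qed.

Lemma adm_factor (E : ExtriCat) (M : ModelStructure E) (X X' : E) (f : Mor X X') :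
  admissible M -> Weq M f ->
  exists (X1 W K : E) (j : Mor X X1) (w : Mor X1 W) (ep : Ext W X)
    (k : Mor K X1) (q : Mor X1 X') (ka : Ext X' K),
    f = mcomp q j /\ real ep j w /\ (cofibrant M W /\ trivial_ob M W) /\
    real ka k q /\ (fibrant M K /\ trivial_ob M K).
Proof.
move=> [_ [_ [H3 H4]]] Hf.
have [X1 [j [q [Hf' [Cj [Wj Fq]]]]]] := fact_tcofib M f.
have Wq : Weq M q by apply: (weq_left Wj); rewrite -Hf'.
have [W [w [ep [HW Hep]]]] := (H3 _ _ j).1 (conj Cj Wj).
have [K [k [ka [HK Hka]]]] := (H4 _ _ q).1 (conj Fq Wq).
by exists X1, W, K, j, w, ep, k, q, ka.
Qed.

Lemma push_tcof (E : ExtriCat) (M : ModelStructure E) (X Y Z X1 W : E) (d : Ext Z X)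
  (i : Mor X Y) (p : Mor Y Z) (j : Mor X X1) (w : Mor X1 W) (ep : Ext W X) :
  admissible M -> real d i p -> real ep j w -> cofibrant M W /\ trivial_ob M W ->
  exists (Y1 : E) (i1 : Mor X1 Y1) (p1 : Mor Y1 Z) (m : Mor Y Y1),
   real (pf j d) i1 p1 /\ Weq M m /\ mcomp m i = mcomp i1 j /\ mcomp p1 m = p.
Proof.
move=> adm Hd Hep HW.
have [Y1 [i1 [p1 H1]]] := real_ex (pf j d).
have [E0 [dd [e [h' [d'' [R1 [R2 [R3 [R4 [R5 R6]]]]]]]]]] := ET4 Hep H1.
rewrite -pf_comp (real_comp0 Hep) pf0e in R4.
have [s [r [Hs1 [Hs2 [Hs3 Hs4]]]]] := real_split R4.
have Hedd : mcomp e dd = 0 := real_comp0 R4.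
have Hd0 : pf j (d - pb s d'') = 0.
  by rewrite pfeB -pb_pf R6 -pb_comp Hs1 pb_id subrr.
have [t Ht] := real_L6 Hep Hd0.
pose s' := s + mcomp dd t.
pose r' := r - mcomp t e.
have Hs'd : pb s' d'' = d.
  by rewrite /s' pb_addm pb_comp R5 -Ht addrC subrK.
have B1 : mcomp e s' = idm Z.
  by rewrite /s' compDr Hs1 Defs.compA Hedd comp0m addr0.
have B2 : mcomp r' dd = idm W.
  by rewrite /r' compBl Hs2 -Defs.compA Hedd compm0 subr0.
have B4 : mcomp r' s' = 0.
  rewrite /r' /s' compBl !compDr Hs4 Defs.compA Hs2 comp1m -!Defs.compA Hs1 compm1.
  by rewrite (Defs.compA e) Hedd comp0m compm0 addr0 add0r subrr.
have B5 : mcomp s' e + mcomp dd r' = idm E0.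
  rewrite /r' /s' compDl compBr addrA addrC addrA -Defs.compA.
  by rewrite (addrC (mcomp s e)) addKr addrC Hs3.
pose S := @Biproduct E Z W E0 s' dd e r' B1 B2 Hedd B4 B5.
have HS : real (0 : Ext W Z) s' r' := real_zero S.
have [E2 [dd2 [e2 [h2 [d2 [T1 [T2 [T3 [T4 [T5 T6]]]]]]]]]] := ET4op R1 HS.
rewrite Hs'd in T4.
have [phi [Hphi [P1 P2]]] := real_uniq Hd T4.
exists Y1, i1, p1, (mcomp h2 phi); split; first done.
split; [|split].
- apply: weq_comp; first exact: weq_iso.
  exact: (adm_infl adm T1 HW).
- by rewrite -Defs.compA P1 T2.
- by rewrite -R3 -Defs.compA (Defs.compA h') T3 -!Defs.compA (Defs.compA e) B1 comp1m P2.
Qed.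

Lemma push_tfib (E : ExtriCat) (M : ModelStructure E) (X1 Y1 Z X' K : E) (th : Ext Z X1)
  (a : Mor X1 Y1) (b : Mor Y1 Z) (k : Mor K X1) (q : Mor X1 X') (ka : Ext X' K) :
  admissible M -> real th a b -> real ka k q -> fibrant M K /\ trivial_ob M K ->
  exists (Y2 : E) (a2 : Mor X' Y2) (b2 : Mor Y2 Z) (m : Mor Y1 Y2),
    real (pf q th) a2 b2 /\ Weq M m /\ mcomp m a = mcomp a2 q /\ mcomp b2 m = b.
Proof.
move=> adm Hth Hka HK.
have [E0 [dd [e [h' [d'' [R1 [R2 [R3 [R4 [R5 R6]]]]]]]]]] := ET4 Hka Hth.
exists E0, dd, e, h'; split; first done.
split; [exact: (adm_defl adm R1 HK)|split; by []].
Qed.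

Lemma push_weq (E : ExtriCat) (M : ModelStructure E) (X Y Z X' : E) (d : Ext Z X)
  (i : Mor X Y) (p : Mor Y Z) (f : Mor X X') :
  admissible M -> real d i p -> Weq M f ->
  exists (Y1 : E) (a1 : Mor X' Y1) (b1 : Mor Y1 Z) (g1 : Mor Y Y1),
    real (pf f d) a1 b1 /\ Weq M g1 /\ mcomp g1 i = mcomp a1 f /\ mcomp b1 g1 = p.
Proof.
move=> adm Hd Hf.
have [X1 [W [K [j [w [ep [k [q [ka [Hfq [Hep [HW [Hka HK]]]]]]]]]]]]] := adm_factor adm Hf.
have [Y1 [i1 [p1 [m [H1 [Wm [Hm1 Hm2]]]]]]] := push_tcof adm Hd Hep HW.
have [Y2 [a2 [b2 [m2 [H2 [Wm2 [Hm3 Hm4]]]]]]] := push_tfib adm H1 Hka HK.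
exists Y2, a2, b2, (mcomp m2 m); split.
  by rewrite Hfq pf_comp.
split; [exact: weq_comp|split].
- by rewrite -Defs.compA Hm1 Defs.compA Hm3 -Defs.compA -Hfq.
- by rewrite Defs.compA Hm4 Hm2.
Qed.

Lemma split_adjust (P : PreAddCat) (A B C : P) (x : Mor A B) (y : Mor B C)
  (s : Mor C B) (r : Mor B A) (t : Mor C A) :
  mcomp y s = idm C -> mcomp r x = idm A -> mcomp x r + mcomp s y = idm B ->
  mcomp r s = 0 -> mcomp y x = 0 ->
  mcomp y (s + mcomp x t) = idm C /\ mcomp (r - mcomp t y) x = idm A /\
  mcomp (r - mcomp t y) (s + mcomp x t) = 0 /\
  mcomp (s + mcomp x t) y + mcomp x (r - mcomp t y) = idm B.
Proof.
move=> Hs1 Hs2 Hs3 Hs4 Hyx; split; [|split; [|split]].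
- by rewrite compDr Hs1 Defs.compA Hyx comp0m addr0.
- by rewrite compBl Hs2 -Defs.compA Hyx compm0 subr0.
- rewrite compBl !compDr Hs4 Defs.compA Hs2 comp1m -!Defs.compA Hs1 compm1.
  by rewrite (Defs.compA y) Hyx comp0m compm0 addr0 add0r subrr.
- rewrite compDl compBr addrA addrC addrA -Defs.compA.
  by rewrite (addrC (mcomp s y)) addKr addrC Hs3.
Qed.

Lemma one_id_fib (E : ExtriCat) (M : ModelStructure E) (A B1 Ec B' C' K : E)
  (th : Ext Ec A) (x1 : Mor A B1) (y1 : Mor B1 Ec)
  (dp : Ext C' A) (x' : Mor A B') (y' : Mor B' C')
  (k : Mor K B1) (q : Mor B1 B') (ka : Ext B' K) :
  admissible M -> real th x1 y1 -> real dp x' y' -> real ka k q ->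
  fibrant M K /\ trivial_ob M K -> mcomp q x1 = x' ->
  exists h2 : Mor Ec C', Weq M h2 /\ mcomp h2 y1 = mcomp y' q /\ th = pb h2 dp.
Proof.
move=> adm Hth Hdp Hka HK Hqx.
have [E3 [dd3 [e3 [h3 [d3 [T1 [T2 [T3 [T4 [T5 T6]]]]]]]]]] := ET4op Hka Hdp.
rewrite -Hqx pb_comp (real_pb0 Hka) pbe0 in T4.
have [s [r [Hs1 [Hs2 [Hs3 Hs4]]]]] := real_split T4.
have He : mcomp e3 dd3 = 0 := real_comp0 T4.
have Hq0 : mcomp q (x1 - mcomp h3 s) = 0.
  by rewrite compBr Hqx Defs.compA T3 -Defs.compA Hs1 compm1 subrr.
have [t Ht] := real_lift Hka Hq0.
have [B1' [B2' [B4' B5']]] := split_adjust t Hs1 Hs2 Hs3 Hs4 He.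
pose S := @Biproduct E A K E3 _ _ _ _ B1' B2' He B4' B5'.
have HS : real (0 : Ext K A) (s + mcomp dd3 t) (r - mcomp t e3) := real_zero S.
have [E4 [dd4 [e4 [h4 [d4 [U1 [U2 [U3 [U4 [U5 U6]]]]]]]]]] := ET4 HS T1.
have Hx1 : mcomp h3 (s + mcomp dd3 t) = x1.
  by rewrite compDr Defs.compA T2 Ht addrC subrK.
rewrite Hx1 in U1.
have H0 : mcomp (idm B1) x1 = mcomp x1 (idm A) by rewrite comp1m compm1.
have [c [Hc1 Hc2]] := ET3 Hth U1 H0.
rewrite compm1 in Hc1; rewrite pf_id in Hc2.
have Hiso := real_CU Hth U1 Hc1 Hc2.
exists (mcomp e4 c); split; [|split].
- apply: weq_comp; first exact: weq_iso.
  exact: (adm_defl adm U4 HK).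
- by rewrite -Defs.compA Hc1 U3.
- by rewrite pb_comp -T5 pb_pf -U6 -pf_comp B1' pf_id.
Qed.

Lemma one_id (E : ExtriCat) (M : ModelStructure E) (A B C B' C' : E)
  (th : Ext C A) (x : Mor A B) (y : Mor B C)
  (dp : Ext C' A) (x' : Mor A B') (y' : Mor B' C') (k : Mor B B') :
  admissible M -> real th x y -> real dp x' y' -> Weq M k -> mcomp k x = x' ->
  exists h : Mor C C', Weq M h /\ mcomp h y = mcomp y' k /\ th = pb h dp.
Proof.
move=> adm Hth Hdp Wk Hk.
have [B2 [W [K [jk [w [ep [kk [qk [ka [Hkq [Hep [HW [Hka HK]]]]]]]]]]]]] := adm_factor adm Wk.
have [E0 [dd [e [h' [d'' [R1 [R2 [R3 [R4 [R5 R6]]]]]]]]]] := ET4 Hth Hep.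
have Wdd : Weq M dd := adm_infl adm R4 HW.
have Hq : mcomp qk (mcomp jk x) = x' by rewrite Defs.compA -Hkq.
have [h2 [Wh2 [Hh2 Hh2d]]] := one_id_fib adm R1 Hdp Hka HK Hq.
exists (mcomp h2 dd); split; [exact: weq_comp|split].
- by rewrite -Defs.compA R2 Defs.compA Hh2 -Defs.compA -Hkq.
- by rewrite pb_comp -Hh2d R5.
Qed.

Lemma part1 (E : ExtriCat) (M : ModelStructure E) (X Y Z X' Y' Z' : E)
  (d : Ext Z X) (dp : Ext Z' X') (i : Mor X Y) (p : Mor Y Z) (i' : Mor X' Y') (p' : Mor Y' Z') :
  admissible M -> real d i p -> real dp i' p' ->
  forall (f : Mor X X') (g : Mor Y Y'),
      Weq M f -> Weq M g -> mcomp g i = mcomp i' f ->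
      exists h : Mor Z Z', Weq M h /\ mcomp h p = mcomp p' g /\ pf f d = pb h dp.
Proof.
move=> adm Hd Hdp f g Wf Wg Hgi.
have [Y1 [a1 [b1 [g1 [H1 [Wg1 [Hg1 Hb1]]]]]]] := push_weq adm Hd Wf.
have [h0 [Hh0 Hh0d]] := ET3 Hd Hdp Hgi.
have H0 : pf (idm X') (pf f d) = pb h0 dp by rewrite pf_id.
have [k0 [Hk01 Hk02]] := real_morph H1 Hdp H0.
rewrite compm1 in Hk01.
have HD : mcomp (mcomp k0 g1 - g) i = 0.
  by rewrite compBl -Defs.compA Hg1 Defs.compA Hk01 Hgi subrr.
have [D1 HD1] := real_ext Hd HD.
pose k := k0 - mcomp D1 b1.
have Hkg : mcomp k g1 = g.
  by rewrite /k compBl -Defs.compA Hb1 HD1 opprB addrC subrK.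
have Hka : mcomp k a1 = i'.
  by rewrite /k compBl Hk01 -Defs.compA (real_comp0 H1) compm0 subr0.
have Wk : Weq M k by apply: (weq_left Wg1); rewrite Hkg.
have [h [Wh [Hh Hhd]]] := one_id adm H1 Hdp Wk Hka.
exists h; split; [by []|split; [|by []]].
by rewrite -Hb1 Defs.compA Hh -Defs.compA Hkg.
Qed.

Definition opP (P : PreAddCat) : PreAddCat.
Proof.
refine (@Build_PreAddCat (Ob P) (fun A B => @Mor P B A)
          (fun A B C g f => mcomp f g) (fun A => idm A) _ _ _ _ _).
- by move=> A B C D h g f; rewrite Defs.compA.
- by move=> A B f; rewrite compm1.
- by move=> A B f; rewrite comp1m.
- by move=> A B C g g' f; rewrite compDr.
- by move=> A B C g f f'; rewrite compDl.
Defined.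

Definition bpO (P : PreAddCat) (A B : P) (S : biproduct (P := opP P) A B) :
  biproduct (P := P) A B.
Proof.
refine (@Biproduct P A B (bp_ob S) (bp_p1 S) (bp_p2 S) (bp_i1 S) (bp_i2 S) _ _ _ _ _).
- exact: (bp_p1i1 S).
- exact: (bp_p2i2 S).
- exact: (bp_p2i1 S).
- exact: (bp_p1i2 S).
- exact: (bp_sum S).
Defined.

Definition bpI (P : PreAddCat) (A B : P) (S : biproduct (P := P) A B) :
  biproduct (P := opP P) A B.
Proof.
refine (@Biproduct (opP P) A B (bp_ob S) (bp_p1 S) (bp_p2 S) (bp_i1 S) (bp_i2 S) _ _ _ _ _).
- exact: (bp_p1i1 S).
- exact: (bp_p2i2 S).
- exact: (bp_p2i1 S).
- exact: (bp_p1i2 S).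
- exact: (bp_sum S).
Defined.

Definition bpSw (P : PreAddCat) (A B : P) (S : biproduct (P := opP P) A B) :
  biproduct (P := P) B A.
Proof.
refine (@Biproduct P B A (bp_ob S) (bp_p2 S) (bp_p1 S) (bp_i2 S) (bp_i1 S) _ _ _ _ _).
- exact: (bp_p2i2 S).
- exact: (bp_p1i1 S).
- exact: (bp_p1i2 S).
- exact: (bp_p2i1 S).
- by rewrite addrC; exact: (bp_sum S).
Defined.

Definition opA (C : AddCat) : AddCat.
Proof.
refine (@Build_AddCat (opP C) (zob C) (zob_zero C) _).
move=> A B; have [S _] := biprod_ex A B.
by exists (bpI S).
Defined.


Lemma op_real_uniq (E : ExtriCat) (A B B' C : E) (d : Ext A C) (x : Mor B A) (y : Mor C B)
  (x' : Mor B' A) (y' : Mor C B') :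
  real d y x -> real d y' x' ->
  exists b : Mor B' B, (exists h : Mor B B', mcomp b h = idm B /\ mcomp h b = idm B') /\
    mcomp x b = x' /\ mcomp b y' = y.
Proof.
move=> H1 H2.
have [b [[g [Hgb Hbg]] [Hb1 Hb2]]] := real_uniq H1 H2.
exists g; split; first by exists b.
split.
- by rewrite -Hb2 -Defs.compA Hbg compm1.
- by rewrite -Hb1 Defs.compA Hgb comp1m.
Qed.

Lemma op_real_closed (E : ExtriCat) (A B B' C : E) (d : Ext A C) (x : Mor B A) (y : Mor C B)
  (x' : Mor B' A) (y' : Mor C B') :
  real d y x ->
  (exists b : Mor B' B, (exists h : Mor B B', mcomp b h = idm B /\ mcomp h b = idm B') /\
    mcomp x b = x' /\ mcomp b y' = y) -> real d y' x'.
Proof.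
move=> H [b [[h [Hbh Hhb]] [Hb1 Hb2]]].
apply: (real_closed H).
exists h; split; first by exists b.
split.
- by rewrite -Hb2 Defs.compA Hhb comp1m.
- by rewrite -Hb1 -Defs.compA Hbh compm1.
Qed.

Lemma op_real_morph (E : ExtriCat) (A B C A' B' C' : E) (d : Ext A C) (d' : Ext A' C')
  (x : Mor B A) (y : Mor C B) (x' : Mor B' A') (y' : Mor C' B') (a : Mor A' A) (c : Mor C' C) :
  real d y x -> real d' y' x' -> pb a d = pf c d' ->
  exists b : Mor B' B, mcomp x b = mcomp a x' /\ mcomp b y' = mcomp y c.
Proof.
move=> H H' Hd.
have [b [Hb1 Hb2]] := real_morph H' H (esym Hd).
by exists b.
Qed.

Lemma op_real_dsum (E : ExtriCat) (A B C A' B' C' : E) (d : Ext A C) (d' : Ext A' C')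
  (x : @Mor E B A) (y : @Mor E C B) (x' : @Mor E B' A') (y' : @Mor E C' B')
  (SA : biproduct (P := opP E) A A') (SB : biproduct (P := opP E) B B')
  (SC : biproduct (P := opP E) C C') :
  real d y x -> real d' y' x' ->
  real (pb (bp_i1 SA : @Mor E (bp_ob SA) A) (pf (bp_p1 SC : @Mor E C (bp_ob SC)) d) +
        pb (bp_i2 SA : @Mor E (bp_ob SA) A') (pf (bp_p2 SC : @Mor E C' (bp_ob SC)) d'))
    (mcomp (mcomp (bp_p1 SB : @Mor E B (bp_ob SB)) y) (bp_i1 SC : @Mor E (bp_ob SC) C) +
     mcomp (mcomp (bp_p2 SB : @Mor E B' (bp_ob SB)) y') (bp_i2 SC : @Mor E (bp_ob SC) C'))
    (mcomp (mcomp (bp_p1 SA : @Mor E A (bp_ob SA)) x) (bp_i1 SB : @Mor E (bp_ob SB) B) +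
     mcomp (mcomp (bp_p2 SA : @Mor E A' (bp_ob SA)) x') (bp_i2 SB : @Mor E (bp_ob SB) B')).
Proof.
move=> H H'.
have := real_dsum (bpO SC) (bpO SB) (bpO SA) H H'.
rewrite /mor_dsum /= !pb_pf !Defs.compA.
done.
Qed.

Lemma op_ET3 (E : ExtriCat) (A B C A' B' C' : E) (d : Ext A C) (d' : Ext A' C')
  (x : Mor B A) (y : Mor C B) (x' : Mor B' A') (y' : Mor C' B') (a : Mor A' A) (b : Mor B' B) :
  real d y x -> real d' y' x' -> mcomp x b = mcomp a x' ->
  exists c : Mor C' C, mcomp y c = mcomp b y' /\ pb a d = pf c d'.
Proof.
move=> H H' Hb.
have [c [Hc1 Hc2]] := ET3op H' H Hb.
by exists c; split.
Qed.

Lemma op_ET3op (E : ExtriCat) (A B C A' B' C' : E) (d : Ext A C) (d' : Ext A' C')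
  (x : Mor B A) (y : Mor C B) (x' : Mor B' A') (y' : Mor C' B') (b : Mor B' B) (c : Mor C' C) :
  real d y x -> real d' y' x' -> mcomp b y' = mcomp y c ->
  exists a : Mor A' A, mcomp a x' = mcomp x b /\ pb a d = pf c d'.
Proof.
move=> H H' Hb.
have [a [Ha1 Ha2]] := ET3 H' H Hb.
by exists a; split.
Qed.

Lemma op_ET4 (E : ExtriCat) (A B C D F : E) (d : Ext A D) (d' : Ext B F)
  (f : Mor B A) (f' : Mor D B) (g : Mor C B) (g' : Mor F C) :
  real d f' f -> real d' g' g ->
  exists (E0 : E) (dd : Mor E0 D) (e : Mor F E0) (h' : Mor E0 C) (d'' : Ext A E0),
    real d'' h' (mcomp f g) /\ mcomp f' dd = mcomp g h' /\ mcomp h' e = g' /\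
    real (pb f' d') e dd /\ pf dd d'' = d /\ pb f d'' = pf e d'.
Proof.
move=> H H'.
have [E0 [dd0 [e0 [h0 [d0 [T1 [T2 [T3 [T4 [T5 T6]]]]]]]]]] := ET4op H' H.
exists E0, e0, dd0, h0, d0; do !split => //.
Qed.

Lemma op_ET4op (E : ExtriCat) (A B C D F : E) (d : Ext D B) (d' : Ext F C)
  (f' : Mor A D) (f : Mor B A) (g' : Mor B F) (g : Mor C B) :
  real d f f' -> real d' g g' ->
  exists (E0 : E) (dd : Mor E0 D) (e : Mor F E0) (h' : Mor A E0) (d'' : Ext E0 C),
    real d'' (mcomp f g) h' /\ mcomp dd h' = f' /\ mcomp h' f = mcomp e g' /\
    real (pf g' d) e dd /\ pb e d'' = d' /\ pb dd d = pf g d''.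
Proof.
move=> H H'.
have [E0 [dd0 [e0 [h0 [d0 [T1 [T2 [T3 [T4 [T5 T6]]]]]]]]]] := ET4 H' H.
exists E0, e0, dd0, h0, d0; do !split => //.
Qed.

Definition opE (E : ExtriCat) : ExtriCat.
Proof.
refine (@Build_ExtriCat (opA E) (fun C A => @Ext E A C)
  (fun C' C A c d => @pf E A C C' c d) (fun C A A' a d => @pb E A' A C a d)
  _ _ _ _ _ _ _ _ _ (fun A B C d x y => @real E C B A d y x) _ _ _ _ _ _ _ _ _ _).
- move=> *; exact: pfD.
- move=> *; exact: pbD.
- move=> *; exact: pf_id.
- move=> *; exact: pb_id.
- move=> *; exact: pf_comp.
- move=> *; exact: pb_comp.
- move=> *; exact: esym (pb_pf _ _ _).
- move=> *; exact: pf_addm.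
- move=> *; exact: pb_addm.
- move=> A C d; have [B [x [y H]]] := real_ex d; by exists B, y, x.
- move=> A B B' C d x y x' y' H1 H2; exact: op_real_uniq H1 H2.
- move=> A B B' C d x y x' y' H1 H2; exact: op_real_closed H1 H2.
- move=> A B C A' B' C' d d' x y x' y' a c H H' Hd; exact: op_real_morph H H' Hd.
- move=> A C S; exact: (real_zero (bpSw S)).
- move=> A B C A' B' C' d d' x y x' y' SA SB SC H H'; exact: op_real_dsum SA SB SC H H'.
- move=> A B C A' B' C' d d' x y x' y' a b H H' Hb; exact: op_ET3 H H' Hb.
- move=> A B C A' B' C' d d' x y x' y' b c H H' Hb; exact: op_ET3op H H' Hb.
- move=> A B C D F d d' f f' g g' H H'; exact: op_ET4 H H'.
- move=> A B C D F d d' f' f g' g H H'; exact: op_ET4op H H'.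
Defined.

Lemma retract_op (P : PreAddCat) (A B A' B' : P) (f : @Mor P B A) (g : @Mor P B' A') :
  @is_retract (opP P) A B A' B' f g -> is_retract f g.
Proof.
move=> [s1 [r1 [s2 [r2 [H1 [H2 [H3 H4]]]]]]].
exists r2, s2, r1, s1; split; [exact: H2|split; [exact: H1|split]].
- exact: (esym H4).
- exact: (esym H3).
Qed.

Lemma llp_op (P : PreAddCat) (A B X Y : P) (i : @Mor P B A) (p : @Mor P Y X) :
  llp p i -> @llp (opP P) A B X Y i p.
Proof.
move=> H u v Huv.
have [d [Hd1 Hd2]] := H v u (esym Huv).
by exists d; split.
Qed.

Definition opM (P : PreAddCat) (M : ModelStructure P) : ModelStructure (opP P).
Proof.
refine (@Build_ModelStructure (opP P) (fun A B f => Fib M f) (fun A B f => CoFib M f)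
  (fun A B f => Weq M f) _ _ _ _ _ _ _ _ _ _).
- move=> A B C f g Hf Hg; exact: (weq_comp Hg Hf).
- move=> A B C f g Hf Hfg; exact: (weq_right Hf Hfg).
- move=> A B C f g Hg Hfg; exact: (weq_left Hg Hfg).
- move=> A B A' B' f g Hr Hg; exact: (fib_retract (retract_op Hr) Hg).
- move=> A B A' B' f g Hr Hg; exact: (cofib_retract (retract_op Hr) Hg).
- move=> A B A' B' f g Hr Hg; exact: (weq_retract (retract_op Hr) Hg).
- move=> A B X Y i p Hi Wi Hp; exact: (llp_op (lift_tfib Hp Hi Wi)).
- move=> A B X Y i p Hi Hp Wp; exact: (llp_op (lift_tcofib Hp Wp Hi)).
- move=> A B f; have [N [i [p [Hf [Ci [Fp Wp]]]]]] := fact_tfib M f.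
  by exists N, p, i.
- move=> A B f; have [N [i [p [Hf [Ci [Wi Fp]]]]]] := fact_tcofib M f.
  by exists N, p, i.
Defined.

Lemma triv_swap (C : AddCat) (M : ModelStructure C) (X : C) :
  Weq M (0 : Mor X (zob C)) <-> Weq M (0 : Mor (zob C) X).
Proof.
have H : mcomp (0 : Mor X (zob C)) (0 : Mor (zob C) X) = idm (zob C).
  by rewrite comp0m zob_zero.
split => HW.
- apply: (weq_right HW); rewrite H; exact: weq_idm.
- apply: (weq_left HW); rewrite H; exact: weq_idm.
Qed.

Lemma adm_op (E : ExtriCat) (M : ModelStructure E) :
  admissible M -> admissible (E := opE E) (opM M : ModelStructure (opE E)).
Proof.
move=> [H1 [H2 [H3 H4]]].
split; [|split; [|split]].
- move=> A B f; exact: (H2 B A f).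
- move=> A B f; exact: (H1 B A f).
- move=> A B f; split.
  + move=> /(H4 B A f) [K [x [d [[HK1 HK2] Hr]]]].
    exists K, x, d; split; last exact: Hr.
    split; first exact: HK1.
    exact: ((triv_swap M K).2 HK2).
  + move=> [K [x [d [[HK1 HK2] Hr]]]].
    apply/(H4 B A f); exists K, x, d; split; last exact: Hr.
    split; first exact: HK1.
    exact: ((triv_swap M K).1 HK2).
- move=> A B f; split.
  + move=> /(H3 B A f) [K [x [d [[HK1 HK2] Hr]]]].
    exists K, x, d; split; last exact: Hr.
    split; first exact: HK1.
    exact: ((triv_swap M K).2 HK2).
  + move=> [K [x [d [[HK1 HK2] Hr]]]].
    apply/(H3 B A f); exists K, x, d; split; last exact: Hr.
    split; first exact: HK1.
    exact: ((triv_swap M K).1 HK2).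
Qed.

Lemma part2 (E : ExtriCat) (M : ModelStructure E) (X Y Z X' Y' Z' : E)
  (d : Ext Z X) (dp : Ext Z' X') (i : Mor X Y) (p : Mor Y Z) (i' : Mor X' Y') (p' : Mor Y' Z') :
  admissible M -> real d i p -> real dp i' p' ->
  forall (g : Mor Y Y') (h : Mor Z Z'),
      Weq M g -> Weq M h -> mcomp h p = mcomp p' g ->
      exists f : Mor X X', Weq M f /\ mcomp g i = mcomp i' f /\ pf f d = pb h dp.
Proof.
move=> adm Hd Hdp g h Wg Wh Hhp.
have := @part1 (opE E) (opM M) Z' Y' X' Z Y X dp d p' i' p i (adm_op adm) Hdp Hd h g Wh Wg
  (esym Hhp).
move=> [f [Wf [Hf1 Hf2]]].
exists f; split; first exact: Wf.
split; first exact: (esym Hf1).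
exact: (esym Hf2).
Qed.

Lemma part3 (E : ExtriCat) (M : ModelStructure E) (X Y Z X' Y' Z' : E)
  (d : Ext Z X) (dp : Ext Z' X') (i : Mor X Y) (p : Mor Y Z) (i' : Mor X' Y') (p' : Mor Y' Z') :
  admissible M -> real d i p -> real dp i' p' ->
  forall (f : Mor X X') (h : Mor Z Z'),
      Weq M f -> Weq M h -> pf f d = pb h dp ->
      exists g : Mor Y Y', Weq M g /\ mcomp g i = mcomp i' f /\ mcomp p' g = mcomp h p.
Proof.
move=> adm Hd Hdp f h Wf Wh Hfh.
have [Y1 [a1 [b1 [g1 [H1 [Wg1 [Hg1 Hb1]]]]]]] := push_weq adm Hd Wf.
have := @push_weq (opE E) (opM M) Z' Y' X' Z dp p' i' h (adm_op adm) Hdp Wh.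
move=> [Y2 [a2 [b2 [g2 [H2 [Wg2 [Hg2 Hb2]]]]]]].
have H2' : real (pf f d) (b2 : @Mor E X' Y2) (a2 : @Mor E Y2 Z) by rewrite Hfh; exact: H2.
have Hb2' : @mcomp E _ _ _ (g2 : @Mor E Y2 Y') (b2 : @Mor E X' Y2) = i' := Hb2.
have Hg2' : @mcomp E _ _ _ p' (g2 : @Mor E Y2 Y') = mcomp h (a2 : @Mor E Y2 Z) := Hg2.
have Wg2' : Weq M (g2 : @Mor E Y2 Y') := Wg2.
have [phi [Hphi [P1 P2]]] := real_uniq H1 H2'.
exists (mcomp (g2 : @Mor E Y2 Y') (mcomp phi g1)); split; [|split].
- apply: weq_comp; last exact: Wg2'.
  by apply: weq_comp; [exact: Wg1|exact: weq_iso].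
- by rewrite -!Defs.compA Hg1 (Defs.compA phi) P1 Defs.compA Hb2'.
- by rewrite Defs.compA Hg2' -Defs.compA (Defs.compA _ phi) P2 Hb1.
Qed.

Theorem lemma3p2 (E : ExtriCat) (M : ModelStructure E) :
  weakly_idempotent_complete E -> admissible M ->
  forall (X Y Z X' Y' Z' : E) (delta : Ext Z X) (delta' : Ext Z' X')
    (i : Mor X Y) (p : Mor Y Z) (i' : Mor X' Y') (p' : Mor Y' Z'),
  real delta i p -> real delta' i' p' ->
  (forall (f : Mor X X') (g : Mor Y Y'),
      Weq M f -> Weq M g -> mcomp g i = mcomp i' f ->
      exists h : Mor Z Z', Weq M h /\ mcomp h p = mcomp p' g /\ pf f delta = pb h delta') /\
  (forall (g : Mor Y Y') (h : Mor Z Z'),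
      Weq M g -> Weq M h -> mcomp h p = mcomp p' g ->
      exists f : Mor X X', Weq M f /\ mcomp g i = mcomp i' f /\ pf f delta = pb h delta') /\
  (forall (f : Mor X X') (h : Mor Z Z'),
      Weq M f -> Weq M h -> pf f delta = pb h delta' ->
      exists g : Mor Y Y', Weq M g /\ mcomp g i = mcomp i' f /\ mcomp p' g = mcomp h p).
Proof.
move=> _ adm X Y Z X' Y' Z' d dp i p i' p' Hd Hdp.
split; [exact: part1|split; [exact: part2|exact: part3]].
Qed.
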